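(* Let $(E,X,Y)$, with $X=(X_1,\dots,X_d)$, be generated by a structural causal model whose graph $\mathcal{G}$ is a DAG, whose distribution is faithful (and Markov) with respect to $\mathcal{G}$, and in which $E$ is exogenous (i.e. $E$ has no parents). If $E\notin\mathrm{PA}_Y$, then $$S_{\mathrm{ICP}}=\mathrm{PA}_Y\cap\big(\mathrm{CH}_E\cup\mathrm{PA}(\mathrm{AN}_Y\cap\mathrm{CH}_E)\big).$$
   Context: In the DAG $\mathcal{G}$, $\mathrm{PA}_v$, $\mathrm{CH}_v$, $\mathrm{AN}_v$ denote the parents, children and ancestors of a node $v$ (not containing $v$), and for a set $A$ of nodes $\mathrm{PA}(A)=\bigcup_{v\in A}\mathrm{PA}_v$. Nodes $j\in[d]=\{1,\dots,d\}$ are identified with the variables $X_j$. A set $S\subseteq[d]$ is invariant if $Y\perp\!\!\!\perp E\mid X_S$, where $X_S=(X_j)_{j\in S}$; $\mathcal{I}$ is the collection of invariant sets, and $S_{\mathrm{ICP}}=\bigcap_{S\in\mathcal{I}}S$ (with $S_{\mathrm{ICP}}=\emptyset$ if $\mathcal{I}=\emptyset$). *)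

(* Defs.v *)
From mathcomp Require Import all_boot.
Set Implicit Arguments. Unset Strict Implicit. Unset Printing Implicit Defensive.

Definition node (d : nat) : finType := (bool + 'I_d)%type.
Definition nE {d : nat} : node d := inl true.
Definition nY {d : nat} : node d := inl false.
Definition nX {d : nat} (j : 'I_d) : node d := inr j.

Section Graph.
Variable V : finType.
Variable G : rel V.   (* G u v  <=>  there is a directed edge u -> v *)

Definition anc (u v : V) : bool := [exists w, G u w && connect G w v].
Definition acyclic : Prop := forall v, ~~ anc v v.

Definition pa (v : V) : {set V} := [set u | G u v].
Definition ch (v : V) : {set V} := [set w | G v w].
Definition an (v : V) : {set V} := [set u | anc u v].
Definition paS (A : {set V}) : {set V} := \bigcup_(v in A) pa v.

Definition adj (u v : V) : bool := G u v || G v u.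

Definition triple_ok (C : {set V}) (x y z : V) : bool :=
  if G x y && G z y then [exists w in C, connect G y w] else y \notin C.

Fixpoint triples_ok (C : {set V}) (x y : V) (s : seq V) : bool :=
  match s with
  | [::] => true
  | z :: s' => triple_ok C x y z && triples_ok C y z s'
  end.

Definition active_path (C : {set V}) (a : V) (s : seq V) : bool :=
  [&& uniq (a :: s), path adj a s &
      match s with [::] => true | y :: s' => triples_ok C a y s' end].

Definition dsep (A B C : {set V}) : Prop :=
  ~ exists a b s, [/\ a \in A, b \in B, last a s = b & active_path C a s].
End Graph.

Section ICP.
Variable d : nat.
(* independence model of the distribution of (E, X, Y):
   indep A B C  <=>  X_A is independent of X_B given X_C *)
Variable indep : {set node d} -> {set node d} -> {set node d} -> bool.

Definition Xset (S : {set 'I_d}) : {set node d} := [set nX j | j in S].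

Definition invariant (S : {set 'I_d}) : bool := indep [set nY] [set nE] (Xset S).

Definition S_ICP : {set 'I_d} :=
  if [exists S, invariant S] then \bigcap_(S | invariant S) S else set0.
End ICP.

Definition markov_faithful (V : finType) (G : rel V)
    (indep : {set V} -> {set V} -> {set V} -> bool) : Prop :=
  forall A B C : {set V}, [disjoint A & B] -> [disjoint A & C] -> [disjoint B & C] ->
    (indep A B C <-> dsep G A B C).

(* Main.v *)
Require Import Defs.
From mathcomp Require Import all_boot.
From mathcomp Require Import zify.
Set Implicit Arguments. Unset Strict Implicit. Unset Printing Implicit Defensive.

Section Gen.
Variable V : finType.
Variable G : rel V.
Hypothesis Hac : acyclic G.

Lemma G_irr u : G u u = false.
Proof. apply/negP=> H; have := Hac u; rewrite /anc; case/negP; apply/existsP; exists u; by rewrite H connect0. Qed.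

Lemma edge_back u v : G u v -> connect G v u -> False.
Proof. move=> H1 H2; have := Hac u; case/negP; apply/existsP; exists v; by rewrite H1 H2. Qed.

Lemma no_cycle2 u v : G u v -> G v u -> False.
Proof. move=> H1 H2; apply: (edge_back H1); exact: connect1. Qed.

Lemma anc_connect u v : anc G u v -> connect G u v.
Proof. case/existsP=> w /andP[H1 H2]; apply: connect_trans H2; exact: connect1. Qed.

Lemma connect_anc u v : connect G u v -> u != v -> anc G u v.
Proof.
case/connectP=> [[|w p]] /= Hp ->; first by rewrite eqxx.
case/andP: Hp => H1 H2 _; apply/existsP; exists w; rewrite H1 /=.
by apply/connectP; exists p.
Qed.

Lemma closed_conn (P : pred V) x y :
  (forall u w, P u -> G u w -> P w) -> connect G x y -> P x -> P y.
Proof.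
move=> Hc /connectP[p Hp ->]; elim: p x Hp => [|z p IH] x //= /andP[H1 H2] Px.
apply: IH H2 _; exact: Hc Px H1.
Qed.

Lemma chain (C : {set V}) (P : pred V) x y s :
  (forall u w, P u -> G u w -> P w) -> (forall u, P u -> u \notin C) ->
  G x y -> P y -> path (adj G) y s -> triples_ok G C x y s -> P (last y s).
Proof.
move=> Hc HC; elim: s x y => [|z s IH] x y //= Hxy Py /andP[Hyz Hp] /andP[Ht Hts].
move: Ht; rewrite /triple_ok Hxy /=.
case Hzy: (G z y) => /=.
  case/existsP=> w /andP[wC cw]; have := HC w (closed_conn Hc cw Py); by rewrite wC.
move=> _; move: Hyz; rewrite /adj Hzy orbF => Hyz.
exact: IH Hyz (Hc _ _ Py Hyz) Hp Hts.
Qed.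

Definition ok3 (C : {set V}) (l : seq V) := if l is a :: y :: s then triples_ok G C a y s else true.

Lemma ok3_nth (C : {set V}) l x0 : ok3 C l <-> forall i, i.+2 < size l ->
  triple_ok G C (nth x0 l i) (nth x0 l i.+1) (nth x0 l i.+2).
Proof.
elim: l => [|a l IH]; first by split.
case: l IH => [|y [|z s]] IH; try by split=> // _ [|[|i]].
change (triple_ok G C a y z && ok3 C [:: y, z & s] <-> (forall i, i.+2 < size [:: a, y, z & s] -> triple_ok G C (nth x0 [:: a, y, z & s] i) (nth x0 [:: a, y, z & s] i.+1) (nth x0 [:: a, y, z & s] i.+2))); split.
  case/andP=> H1 /IH H2 [|i] //= Hi; exact: H2.
move=> H; apply/andP; split; first exact: (H 0).
apply/IH => i Hi; exact: (H i.+1).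
Qed.

Lemma triple_sym (C : {set V}) x y z : triple_ok G C x y z = triple_ok G C z y x.
Proof. by rewrite /triple_ok andbC. Qed.

Lemma ok3_rev (C : {set V}) l : ok3 C l -> ok3 C (rev l).
Proof.
case: l => [|x0 l] //; set L := x0 :: l => H.
apply/(ok3_nth _ _ x0) => i; rewrite size_rev => Hi.
have /(ok3_nth _ _ x0) H' := H.
have := H' (size L - i.+3) ltac:(lia).
rewrite !nth_rev; try lia.
rewrite triple_sym.
have -> : (size L - i.+3).+2 = size L - i.+1 by lia.
have -> : (size L - i.+3).+1 = size L - i.+2 by lia.
done.
Qed.

Lemma active_rev (C : {set V}) a s : active_path G C a s ->
  active_path G C (last a s) (rev (belast a s)) /\ last (last a s) (rev (belast a s)) = a.
Proof.
have E : last a s :: rev (belast a s) = rev (a :: s) by rewrite [in RHS]lastI rev_rcons.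
case/and3P=> Hu Hp Ho; split.
  apply/and3P; split.
  - by rewrite E rev_uniq.
  - rewrite rev_path; apply: sub_path Hp => u v; by rewrite /adj orbC.
  - have := ok3_rev (C:=C) (l := a :: s) Ho; by rewrite -E.
case: s {E Hu Hp Ho} => [|y s] //=.
by rewrite rev_cons last_rcons.
Qed.

Lemma directed_ok (C : {set V}) x y s : G x y -> path G y s -> (forall u, u \in y :: s -> u \notin C) ->
  triples_ok G C x y s.
Proof.
elim: s x y => [|z s IH] x y //= Hxy /andP[Hyz Hp] HC.
apply/andP; split.
  rewrite /triple_ok; case: (G z y) (no_cycle2 Hyz) => [F|_]; first by case: F.
  rewrite andbF; apply: HC; exact: mem_head.
apply: IH => // u Hu; apply: HC; by rewrite inE Hu orbT.
Qed.
End Gen.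

Section Main.
Variable d : nat.
Variable G : rel (node d).
Variable indep : {set node d} -> {set node d} -> {set node d} -> bool.
Hypothesis Hac : acyclic G.
Hypothesis Hmf : markov_faithful G indep.
Hypothesis Hex : forall v : node d, ~~ G v nE.
Hypothesis HEY : nE \notin pa G nY.

Lemma inXset (S : {set 'I_d}) (u : node d) :
  (u \in Xset S) = (if u is inr k then k \in S else false).
Proof.
case: u => [b|k].
  by apply/imsetP => -[k _].
have inj : injective (@nX d) by move=> a b [].
exact: (mem_imset _ _ inj).
Qed.

Lemma inv_dsep (S : {set 'I_d}) : Defs.invariant indep S <-> dsep G [set nY] [set nE] (Xset S).
Proof.
apply: Hmf; rewrite disjoints1 ?inXset //.
by rewrite in_set1.
Qed.

Lemma GEn v : G v nE = false.
Proof. by apply/negP; move: (Hex v) => /negP. Qed.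

Lemma GEY : G nE nY = false.
Proof. by apply/negP => H; move: HEY; rewrite inE H. Qed.

Definition SP : {set 'I_d} := [set k | nX k \in pa G nY].

Lemma PA_inv : dsep G [set nY] [set nE] (Xset SP).
Proof.
move=> [a [b [s [/set1P -> /set1P -> Hl Hact]]]].
case: s Hl Hact => [|v1 s] //= Hl /and3P[Hu /andP[Hadj Hp] Ho].
case/orP: Hadj => H.
  pose P := fun u : node d => (u != nE) && connect G nY u.
  suff : P (last v1 s) by rewrite Hl /P eqxx.
  apply: (chain (C := Xset SP) _ _ H) => //.
  - move=> u w /andP[_ c] Huw; rewrite /P; apply/andP; split.
      by apply/eqP => E; move: Huw; rewrite E GEn.
    apply: connect_trans c _; exact: connect1.
  - move=> u /andP[_ c]; rewrite inXset; case: u c => [//|k] c.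
    rewrite inE inE; apply/negP => Hk; exact: (edge_back Hac Hk c).
  - rewrite /P connect1 // andbT; apply/eqP => E; by move: H; rewrite E GEn.
case: s Hl Hu Hp Ho => [|z s] /= Hl Hu Hp Ho.
  by move: H; rewrite Hl GEY.
case/andP: Ho; rewrite /triple_ok.
case: (G nY v1) (no_cycle2 Hac H) => [F|_]; first by case: F.
rewrite /= inXset => Hv _.
have v1E : v1 != nE.
  apply/eqP => E; move: Hu; rewrite E -Hl (mem_last z s).
  by rewrite andbF.
case: v1 H Hv v1E Hu Hl Hp => [[] |k] H Hv v1E.
- by rewrite eqxx in v1E.
- by rewrite (G_irr Hac) in H.
- by rewrite inE inE H in Hv.
Qed.

Lemma nodeX (u : node d) : u != nE -> u != nY -> exists k, u = nX k.
Proof. by case: u => [[]|k] //; exists k. Qed.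

Definition Sj j : {set 'I_d} := [set k | (nX k \in an G nY) && (k != j)].

Lemma Cj_inv j : nX j \notin ch G nE -> nX j \notin paS G (an G nY :&: ch G nE) ->
  dsep G [set nY] [set nE] (Xset (Sj j)).
Proof.
move=> Hj1 Hj2 [a [b [s [/set1P -> /set1P -> Hl Hact]]]].
have [Hact' Hl'] := active_rev Hact; rewrite Hl in Hact' Hl'.
move: Hact' Hl'; case: (rev (belast nY s)) => [|v1 s'] /=; first by move=> _; discriminate.
move=> /and3P[Hu /andP[Hadj Hp] Ho] Hl'.
have H1 : G nE v1 by move: Hadj; rewrite /adj GEn orbF.
pose P := fun u : node d => ~~ connect G u nY.
have cv1 : connect G v1 nY.
  apply/negPn/negP => Hn.
  suff : P (last v1 s') by rewrite Hl' /P connect0.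
  apply: (chain (C := Xset (Sj j)) _ _ H1) => //.
  - move=> u w Hu' Huw; apply/negP => c; move/negP: Hu'; apply.
    exact: (connect_trans (connect1 Huw) c).
  - move=> u Hu'; rewrite inXset; case: u Hu' => [//|k] Hu'.
    rewrite inE inE; apply/negP => /andP[Ha _]; move/negP: Hu'; apply.
    exact: anc_connect.
have v1Y : v1 != nY by apply/eqP => E; move: H1; rewrite E GEY.
have v1E : v1 != nE by apply/eqP => E; move: H1; rewrite E GEn.
have av1 : anc G v1 nY := connect_anc cv1 v1Y.
case: s' Hl' Hu Hp Ho => [|v2 s''] Hl' Hu Hp Ho; first by rewrite /= in Hl'; rewrite Hl' eqxx in v1Y.
move: Ho => /= /andP[Ht Ho].
have [k1 Ek1] := nodeX v1E v1Y.
have v1C : v1 \in Xset (Sj j).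
  rewrite Ek1 inXset /= !inE -Ek1 av1 /=.
  apply/eqP => E; move: Hj1; rewrite -E -Ek1 inE H1 //.
move: Ht; rewrite /triple_ok H1 /=.
case H2 : (G v2 v1) => /=; last by rewrite v1C.
move=> _.
have cv2 : connect G v2 nY := connect_trans (connect1 H2) cv1.
have v2Y : v2 != nY by apply/eqP => E; rewrite E in H2; exact: (edge_back Hac H2 cv1).
have v2E : v2 != nE.
  apply/eqP => E; move: Hu; rewrite E /= !inE eqxx orbT //.
have [k2 Ek2] := nodeX v2E v2Y.
have v2C : v2 \in Xset (Sj j).
  rewrite Ek2 inXset /= !inE -Ek2 (connect_anc cv2 v2Y) /=.
  apply/eqP => E; move: Hj2; rewrite -E -Ek2; apply/negP/negPn.
  apply/bigcupP; exists v1; first by rewrite !inE av1 H1.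
  by rewrite inE.
case: s'' Hl' Hu Hp Ho => [|v3 s3] Hl' Hu Hp Ho; first by rewrite /= in Hl'; rewrite Hl' eqxx in v2Y.
move: Ho => /= /andP[Ht _]; move: Ht; rewrite /triple_ok.
case: (G v1 v2) (no_cycle2 Hac H2) => [F|_]; first by case: F.
by rewrite /= v2C.
Qed.

Lemma simple_path x y : connect G x y -> exists p, [/\ path G x p, uniq (x :: p) & last x p = y].
Proof. case/connectP => p Hp ->; case: (shortenP Hp) => p' Hp' Hu' _; by exists p'. Qed.

Lemma must_contain (S : {set 'I_d}) j : Defs.invariant indep S -> nX j \in pa G nY ->
  nX j \in ch G nE :|: paS G (an G nY :&: ch G nE) -> j \in S.
Proof.
move=> /inv_dsep Hd Hpa Hr; apply/negPn/negP => HjS.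
have jC : nX j \notin Xset S by rewrite inXset.
have GjY : G (nX j) nY by move: Hpa; rewrite inE.
have GYj : G nY (nX j) = false by apply/negP => H; exact: (no_cycle2 Hac GjY H).
apply: Hd.
case/setUP: Hr => [Hch | /bigcupP[k Hk Hjk]].
  have GEj : G nE (nX j) by move: Hch; rewrite inE.
  exists nY, nE, [:: nX j; nE]; split; rewrite ?in_set1 //.
  apply/and3P; split.
  - by [].
  - by rewrite /= /adj GjY GEj !orbT.
  - by rewrite /= /triple_ok GYj /= jC.
move: Hk; rewrite !inE => /andP[ak GEk].
move: Hjk; rewrite inE => Hjk.
have kY : k != nY by apply/eqP => E; move: (Hac k); rewrite {2}E ak.
have kj : k != nX j by apply/eqP => E; move: Hjk; rewrite E (G_irr Hac).
have kE : k != nE by apply/eqP => E; move: GEk; rewrite E GEn.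
case: (boolP [exists w in Xset S, connect G k w]) => Hw.
  exists nY, nE, [:: nX j; k; nE]; split; rewrite ?in_set1 //.
  apply/and3P; split.
  - rewrite /= !inE !negb_or (eq_sym nY k) (eq_sym (nX j) k) kY kj kE /=.
    by [].
  - by rewrite /= /adj GjY Hjk GEk !orbT.
  - by rewrite /= /triple_ok GYj /= jC Hjk GEk /= Hw.
have [p [Hp Hu Hl]] := simple_path (anc_connect ak).
have Hact : active_path G (Xset S) nE (k :: p).
  apply/and3P; split.
  - rewrite cons_uniq Hu andbT; apply/negP => /(path_connect Hp) c.
    exact: (edge_back Hac GEk c).
  - rewrite /= {1}/adj GEk /=; apply: sub_path Hp => u v H; by rewrite /adj H.
  - apply: (directed_ok Hac GEk Hp) => u /(path_connect Hp) c.
    apply/negP => uC; move/negP: Hw; apply; apply/existsP; exists u; by rewrite uC c.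
have [H1 H2] := active_rev Hact.
exists nY, nE, (rev (belast nE (k :: p))); split; rewrite ?in_set1 //.
  by move: H2; rewrite /= Hl.
by move: H1; rewrite /= Hl.
Qed.
End Main.

Theorem proposition4 (d : nat) (G : rel (node d))
    (indep : {set node d} -> {set node d} -> {set node d} -> bool) :
  acyclic G ->
  markov_faithful G indep ->
  (forall v : node d, ~~ G v nE) ->
  nE \notin pa G nY ->
  S_ICP indep =
  [set j : 'I_d | nX j \in pa G nY :&: (ch G nE :|: paS G (an G nY :&: ch G nE))].
Proof.
move=> Hac Hmf Hex HEY.
have HSP : Defs.invariant indep (SP G) := proj2 (inv_dsep Hmf (SP G)) (PA_inv Hac Hex HEY).
rewrite /S_ICP; case: ifP => [_|/existsP[]]; last by exists (SP G).
apply/setP => j; rewrite [RHS]inE; apply/bigcapP/idP.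
  move=> H.
  case Hpa: (nX j \in pa G nY); last first.
    by have := H _ HSP; rewrite inE Hpa.
  case Hr: (nX j \in ch G nE :|: paS G (an G nY :&: ch G nE)).
    by rewrite inE Hpa Hr.
  move: Hr; rewrite inE => /norP[Hj1 Hj2].
  have := H _ (proj2 (inv_dsep Hmf (Sj G j)) (Cj_inv Hac Hex HEY Hj1 Hj2)).
  by rewrite inE eqxx andbF.
move=> /setIP[Hpa Hr] S HS; exact: (must_contain Hac Hmf Hex HS Hpa Hr).
Qed.
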